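(* The group $\operatorname{IET}^{\bowtie}$ is generated by the images of flips.
   Context: $X=[0,1[$. $\widehat{\operatorname{IET}^{\bowtie}}$ is the group of bijections $f:X\to X$ for which there is a finite partition of $X$ into intervals $[a,b[$ such that on each open interval $]a,b[$, $f$ is of the form $x\mapsto x+c$ or $x\mapsto -x+c$. ${\mathfrak S}_{\mathrm{fin}}$ is its normal subgroup of finitely supported permutations and $\operatorname{IET}^{\bowtie}=\widehat{\operatorname{IET}^{\bowtie}}/{\mathfrak S}_{\mathrm{fin}}$. For a nonempty interval $I=[a,b[\subseteq X$, the $I$-flip is the bijection of $X$ mapping $x\mapsto a+b-x$ on $]a,b[$ and fixing every other point; a flip is an $I$-flip for some such $I$, and ''images of flips'' means their images in $\operatorname{IET}^{\bowtie}$. *)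

(* Defs.v *)
From Stdlib Require Import Reals List.
Open Scope R_scope.

Definition inX (x : R) : Prop := 0 <= x < 1.

(* An element of \widehat{IET^bowtie}: a function R -> R whose restriction to X
   is a bijection X -> X, and such that there is a finite partition
   0 = p 0 < p 1 < ... < p n = 1 of X into intervals [p i, p (i+1)[ on each
   open interval ]p i, p (i+1)[ of which f is x |-> x + c or x |-> -x + c.
   (Values of f outside X are irrelevant.) *)
Definition IET_hat (f : R -> R) : Prop :=
  (forall x, inX x -> inX (f x)) /\
  (forall x y, inX x -> inX y -> f x = f y -> x = y) /\
  (forall y, inX y -> exists x, inX x /\ f x = y) /\
  exists (n : nat) (p : nat -> R),
    p 0%nat = 0 /\ p n = 1 /\
    (forall i, (i < n)%nat -> p i < p (S i)) /\
    (forall i, (i < n)%nat -> exists c : R,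
        (forall x, p i < x < p (S i) -> f x = x + c) \/
        (forall x, p i < x < p (S i) -> f x = - x + c)).

Definition flip (a b : R) (x : R) : R :=
  if Rlt_dec a x then (if Rlt_dec x b then a + b - x else x) else x.

Definition flip_interval (ab : R * R) : Prop :=
  0 <= fst ab /\ fst ab < snd ab /\ snd ab <= 1.

(* Composition of the flips listed: [I1; I2; ...; Ik] gives flip_I1 o flip_I2 o ... o flip_Ik *)
Definition flip_word (w : list (R * R)) : R -> R :=
  fold_right (fun ab g => fun x => flip (fst ab) (snd ab) (g x)) (fun x => x) w.

(* f and g agree on X up to finitely many points, i.e. they have the same
   image in IET^bowtie = \widehat{IET^bowtie} / S_fin. *)
Definition eq_mod_fin (f g : R -> R) : Prop :=
  exists l : list R, forall x, inX x -> f x <> g x -> In x l.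

(* Main.v *)
Require Import Defs.
From Stdlib Require Import Reals List.
From Stdlib Require Import Lra Lia ClassicalEpsilon Classical.
Open Scope R_scope.

Ltac dflip := repeat match goal with |- context [Rlt_dec ?u ?v] => destruct (Rlt_dec u v) end.

Lemma flip_invol a b x : flip a b (flip a b x) = x.
Proof. unfold flip; dflip; lra. Qed.

Lemma flip_X a b x : 0 <= a -> b <= 1 -> inX x -> inX (flip a b x).
Proof. intros Ha Hb [H1 H2]; unfold inX, flip; dflip; split; lra. Qed.

Lemma flip_word_app w1 w2 x : flip_word (w1 ++ w2) x = flip_word w1 (flip_word w2 x).
Proof. unfold flip_word. induction w1 as [|ab w1 IH]; simpl; [reflexivity| now rewrite IH]. Qed.

Definition fl (u v : R) : list (R*R) := if Rlt_dec u v then (u,v)::nil else nil.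

Lemma flip_word_fl u v x : flip_word (fl u v) x = flip u v x.
Proof. unfold fl, flip_word; destruct (Rlt_dec u v); simpl; [reflexivity|]. unfold flip; dflip; lra. Qed.

Lemma Forall_fl u v : 0 <= u -> v <= 1 -> Forall flip_interval (fl u v).
Proof.
  intros; unfold fl; destruct (Rlt_dec u v).
  - constructor. + unfold flip_interval; simpl; repeat split; lra. + constructor.
  - constructor.
Qed.

Lemma avoid (l : list R) : forall u v, u < v -> exists y, u < y < v /\ ~ In y l.
Proof.
  induction l as [|a l IH]; intros u v Huv.
  - exists ((u+v)/2); split; [split; lra|]; simpl; tauto.
  - destruct (IH u v Huv) as [y [Hy Hn]].
    destruct (Req_dec y a) as [->|Hya].
    + destruct (IH u a (proj1 Hy)) as [y' [Hy' Hn']].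
      exists y'; split; [destruct Hy, Hy'; split; lra|]. simpl; intros [H|H]; [destruct Hy'; lra|tauto].
    + exists y; split; [exact Hy|]. simpl; intros [H|H]; [congruence|tauto].
Qed.

Lemma mono_lt (k : nat) (p : nat -> R) : (forall j, (j < k)%nat -> p j < p (S j)) ->
  forall i j, (i < j <= k)%nat -> p i < p j.
Proof.
  intros Hinc i j. induction j as [|j IH]; intros Hij; [lia|].
  destruct (Nat.eq_dec i j) as [->|Hne].
  - apply Hinc; lia.
  - apply Rlt_trans with (p j); [apply IH; lia | apply Hinc; lia].
Qed.

Lemma mono_le k p : (forall j, (j < k)%nat -> p j < p (S j)) ->
  forall i j, (i <= j <= k)%nat -> p i <= p j.
Proof.
  intros Hinc i j H. destruct (Nat.eq_dec i j) as [->|Hne]; [lra|].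
  left; apply (mono_lt k p Hinc); lia.
Qed.

Lemma cover (k : nat) (p : nat -> R) : (forall j, (j < k)%nat -> p j < p (S j)) ->
  forall x, p 0%nat <= x < p k -> exists j, (j < k)%nat /\ p j <= x < p (S j).
Proof.
  induction k as [|k IH]; intros Hinc x [Hx1 Hx2]; [lra|].
  destruct (Rlt_dec x (p k)) as [Hlt|Hge].
  - destruct (IH (fun j Hj => Hinc j ltac:(lia)) x) as [j [Hj Hjx]]; [split; lra|].
    exists j; split; [lia|exact Hjx].
  - exists k; split; [lia|split; lra].
Qed.

Lemma fmax (k : nat) (r : nat -> R) (L : R) : (forall j, (j < k)%nat -> r j < L) ->
  exists M, M < L /\ forall j, (j < k)%nat -> r j <= M.
Proof.
  induction k as [|k IH]; intros H.
  - exists (L - 1); split; [lra| intros j Hj; exfalso; lia].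
  - destruct IH as [M [HM HjM]]; [intros; apply H; lia|].
    exists (Rmax M (r k)); split.
    + apply Rmax_lub_lt; [lra| apply H; lia].
    + intros j Hj. destruct (Nat.eq_dec j k) as [->|Hne]; [apply Rmax_r|].
      apply Rle_trans with M; [apply HjM; lia| apply Rmax_l].
Qed.

Definition Gen (k : nat) (L : R) (p c : nat -> R) (s : nat -> bool) (f : R -> R) : Prop :=
  L <= 1 /\ p 0%nat = 0 /\ p k = L /\
  (forall j, (j < k)%nat -> p j < p (S j)) /\
  (forall j, (j < k)%nat -> forall x, p j < x < p (S j) -> f x = (if s j then x else - x) + c j) /\
  (exists l, forall x, L < x < 1 -> ~ In x l -> f x = x) /\
  (forall x, inX x -> inX (f x)) /\
  (forall x y, inX x -> inX y -> f x = f y -> x = y) /\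
  (forall y, inX y -> exists x, inX x /\ f x = y).

Definition rr (p c : nat -> R) (s : nat -> bool) j := if s j then p (S j) + c j else c j - p j.

Lemma piece_lt (p c : nat -> R) (s : nat -> bool) (f : R -> R) (j : nat) : (forall x, p j < x < p (S j) -> f x = (if s j then x else - x) + c j) ->
  forall x, p j < x < p (S j) -> f x < rr p c s j.
Proof. intros H x Hx. rewrite (H x Hx). unfold rr. destruct (s j); destruct Hx; lra. Qed.

Lemma piece_pre (p c : nat -> R) (s : nat -> bool) (f : R -> R) (j : nat) : p j < p (S j) -> (forall x, p j < x < p (S j) -> f x = (if s j then x else - x) + c j) ->
  forall y, rr p c s j - (p (S j) - p j) < y < rr p c s j -> exists x, p j < x < p (S j) /\ f x = y.
Proof.
  intros Hlt H y Hy. unfold rr in Hy. destruct (s j) eqn:E.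
  - exists (y - c j). assert (Hx: p j < y - c j < p (S j)) by (destruct Hy; split; lra).
    split; [exact Hx|]. rewrite (H _ Hx), ?E. lra.
  - exists (c j - y). assert (Hx: p j < c j - y < p (S j)) by (destruct Hy; split; lra).
    split; [exact Hx|]. rewrite (H _ Hx), ?E. lra.
Qed.

Lemma Gen_bounds k L p c s f : Gen k L p c s f -> forall j, (j < k)%nat -> 0 <= p j /\ p (S j) <= L.
Proof.
  intros (HL & H0 & Hk & Hinc & _). intros j Hj. split.
  - rewrite <- H0. apply (mono_le k p Hinc); lia.
  - rewrite <- Hk. apply (mono_le k p Hinc); lia.
Qed.

Lemma rr_le_1 k L p c s f : Gen k L p c s f -> forall j, (j < k)%nat -> rr p c s j <= 1.
Proof.
  intros G j Hj. pose proof (Gen_bounds _ _ _ _ _ _ G j Hj) as [Hp0 HpL].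
  destruct G as (HL & H0 & Hk & Hinc & Hpc & _ & Hmap & _).
  destruct (Rle_dec (rr p c s j) 1) as [?|Hgt]; [assumption|exfalso].
  apply Rnot_le_lt in Hgt.
  pose proof (Hinc j Hj) as Hjj.
  assert (Hm1 := Rmax_l 1 (rr p c s j - (p (S j) - p j))).
  assert (Hm2 := Rmax_r 1 (rr p c s j - (p (S j) - p j))).
  assert (Hm3 : Rmax 1 (rr p c s j - (p (S j) - p j)) < rr p c s j) by (apply Rmax_lub_lt; lra).
  destruct (piece_pre p c s f j Hjj (Hpc j Hj) ((Rmax 1 (rr p c s j - (p (S j) - p j)) + rr p c s j) / 2))
    as [x [Hx Hfx]]; [split; lra|].
  assert (Hx' : inX x) by (unfold inX; destruct Hx; split; lra).
  apply Hmap in Hx'. rewrite Hfx in Hx'. destruct Hx' as [_ Hy1]. lra.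
Qed.

Lemma rr_le_L k L p c s f : Gen k L p c s f -> forall j, (j < k)%nat -> rr p c s j <= L.
Proof.
  intros G j Hj. pose proof (rr_le_1 _ _ _ _ _ _ G j Hj) as Hr1.
  pose proof (Gen_bounds _ _ _ _ _ _ G j Hj) as [Hp0 HpL].
  destruct G as (HL & H0 & Hk & Hinc & Hpc & [l Hl] & Hmap & Hinj & _).
  destruct (Rle_dec (rr p c s j) L) as [?|Hgt]; [assumption|exfalso].
  apply Rnot_le_lt in Hgt.
  pose proof (Hinc j Hj) as Hjj.
  assert (Hm1 := Rmax_l L (rr p c s j - (p (S j) - p j))).
  assert (Hm2 := Rmax_r L (rr p c s j - (p (S j) - p j))).
  assert (Hm3 : Rmax L (rr p c s j - (p (S j) - p j)) < rr p c s j) by (apply Rmax_lub_lt; lra).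
  destruct (avoid l _ _ Hm3) as [y [Hy Hny]].
  destruct (piece_pre p c s f j Hjj (Hpc j Hj) y) as [x [Hx Hfx]]; [destruct Hy; split; lra|].
  assert (Hfy : f y = y) by (apply Hl; [destruct Hy; split; lra | exact Hny]).
  assert (x = y) by (apply Hinj; [unfold inX; destruct Hx; split; lra | unfold inX; destruct Hy; split; lra | congruence]).
  destruct Hx, Hy; lra.
Qed.

Lemma exists_last k L p c s f : Gen (S k) L p c s f -> exists i, (i < S k)%nat /\ rr p c s i = L.
Proof.
  intros G.
  destruct (classic (exists i, (i < S k)%nat /\ rr p c s i = L)) as [?|Hno]; [assumption|exfalso].
  assert (Hlt : forall j, (j < S k)%nat -> rr p c s j < L).
  { intros j Hj. destruct (Rle_lt_or_eq_dec _ _ (rr_le_L _ _ _ _ _ _ G j Hj)) as [?|E]; [assumption|].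
    exfalso; apply Hno; exists j; split; assumption. }
  destruct (fmax (S k) (rr p c s) L Hlt) as [M [HM HjM]].
  destruct G as (HL & H0 & Hk & Hinc & Hpc & [l Hl] & Hmap & Hinj & Hsurj).
  assert (HL0 : 0 < L) by (rewrite <- Hk, <- H0; apply (mono_lt (S k) p Hinc); lia).
  assert (Hm : Rmax M 0 < L) by (apply Rmax_lub_lt; lra).
  destruct (avoid (map f (l ++ L :: map p (seq 0 (S (S k))))) (Rmax M 0) L Hm) as [y [Hy HyE]].
  assert (HM0 := Rmax_l M 0). assert (HM1 := Rmax_r M 0).
  destruct (Hsurj y) as [x [Hx Hfx]]; [unfold inX; destruct Hy; split; lra|].
  destruct Hx as [Hx0 Hx1].
  destruct (Rlt_le_dec x L) as [HxL|HxL].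
  - destruct (cover (S k) p Hinc x) as [j [Hj [Hjx1 Hjx2]]]; [rewrite H0, Hk; split; lra|].
    destruct (Rle_lt_or_eq_dec _ _ Hjx1) as [Hjx|Hjx].
    + assert (f x < rr p c s j) by (apply (piece_lt p c s f j (Hpc j Hj)); split; lra).
      specialize (HjM j Hj). destruct Hy; lra.
    + apply HyE. rewrite <- Hfx, <- Hjx. apply in_map, in_or_app. right; right.
      apply in_map, in_seq. lia.
  - destruct (Rle_lt_or_eq_dec _ _ HxL) as [HxL'|HxL'].
    + destruct (classic (In x l)) as [Hin|Hnin].
      * apply HyE. rewrite <- Hfx. apply in_map, in_or_app. left; exact Hin.
      * rewrite (Hl x (conj HxL' Hx1) Hnin) in Hfx. destruct Hy; lra.
    + apply HyE. rewrite <- Hfx, <- HxL'. apply in_map, in_or_app. right; left; reflexivity.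
Qed.

Definition gm (a b L : R) (t : bool) (y : R) : R :=
  if t then flip a b (flip b L (flip a L y)) else flip b L (flip a L y).
Definition hm (a b L : R) (t : bool) (x : R) : R :=
  flip a L (flip b L (if t then flip a b x else x)).

Lemma gm_hm a b L (t : bool) x : gm a b L t (hm a b L t x) = x.
Proof. unfold gm, hm; destruct t; rewrite !flip_invol; reflexivity. Qed.
Lemma hm_gm a b L (t : bool) x : hm a b L t (gm a b L t x) = x.
Proof. unfold gm, hm; destruct t; rewrite !flip_invol; reflexivity. Qed.

Lemma gm_X a b L (t : bool) y : 0 <= a -> a <= b -> b <= 1 -> L <= 1 -> inX y -> inX (gm a b L t y).
Proof. intros; unfold gm; destruct t; repeat (apply flip_X; try lra); assumption. Qed.
Lemma hm_X a b L (t : bool) y : 0 <= a -> a <= b -> b <= 1 -> L <= 1 -> inX y -> inX (hm a b L t y).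
Proof. intros; unfold hm; destruct t; repeat (apply flip_X; try lra); assumption. Qed.

Lemma gm_low a b L (t : bool) y : y <= a -> a <= b -> gm a b L t y = y.
Proof. intros; unfold gm, flip; destruct t; dflip; lra. Qed.
Lemma gm_high a b L (t : bool) y : L <= y -> a <= b -> b <= L -> gm a b L t y = y.
Proof. intros; unfold gm, flip; destruct t; dflip; lra. Qed.
Lemma gm_mid a b L (t : bool) y : a < b -> b <= L -> a < y -> y < L - (b - a) -> gm a b L t y = y + (b - a).
Proof. intros; unfold gm, flip; destruct t; dflip; lra. Qed.
Lemma gm_top a b L (t : bool) y : a < b -> b <= L -> L - (b - a) < y -> y < L ->
  gm a b L t y = if t then y - L + b else a + L - y.
Proof. intros; unfold gm, flip; destruct t; cbv iota; dflip; lra. Qed.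

Lemma flip_word_hm a b L (t : bool) x :
  flip_word (fl a L ++ fl b L ++ (if t then fl a b else nil)) x = hm a b L t x.
Proof. destruct t; rewrite !flip_word_app, !flip_word_fl; reflexivity. Qed.

Lemma main_gen (k : nat) : forall L p c s f, Gen k L p c s f ->
  exists w, Forall flip_interval w /\ eq_mod_fin f (flip_word w).
Proof.
  induction k as [|k IH]; intros L p c s f G.
  - destruct G as (HL & H0 & Hk & _ & _ & [l Hl] & _).
    exists nil; split; [constructor|].
    exists (0 :: l). intros x [Hx0 Hx1] Hne. simpl.
    destruct (Req_dec x 0) as [->|Hx]; [left; reflexivity|right].
    destruct (classic (In x l)) as [?|Hn]; [assumption|].
    exfalso; apply Hne. unfold flip_word; simpl. apply Hl; [split; lra|exact Hn].
  - destruct (exists_last _ _ _ _ _ _ G) as [i [Hi Hri]].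
    pose proof (Gen_bounds _ _ _ _ _ _ G i Hi) as [Ha0 HbL].
    destruct G as (HL & H0 & Hk & Hinc & Hpc & [l Hl] & Hmap & Hinj & Hsurj).
    assert (Hab : p i < p (S i)) by (apply Hinc; exact Hi).
    unfold rr in Hri.
    set (p' := fun j => if Compare_dec.le_lt_dec j i then p j else p (S j) - (p (S i) - p i)).
    set (s' := fun j => if Compare_dec.lt_dec j i then s j else s (S j)).
    set (c' := fun j => if Compare_dec.lt_dec j i then c j else
                 if s (S j) then c (S j) + (p (S i) - p i) else c (S j) - (p (S i) - p i)).
    assert (Hp'1 : forall j, (j <= i)%nat -> p' j = p j).
    { intros j Hj; unfold p'; destruct (Compare_dec.le_lt_dec j i); [reflexivity|lia]. }
    assert (Hp'2 : forall j, (i <= j)%nat -> p' j = p (S j) - (p (S i) - p i)).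
    { intros j Hj; unfold p'; destruct (Compare_dec.le_lt_dec j i); [|reflexivity].
      assert (j = i) by lia. subst j. ring. }
    set (G0 := gm (p i) (p (S i)) L (s i)).
    set (H0' := hm (p i) (p (S i)) L (s i)).
    assert (G' : Gen k (L - (p (S i) - p i)) p' c' s' (fun y => f (G0 y))).
    { split; [lra|]. split.
      { rewrite Hp'1 by lia. exact H0. }
      split.
      { destruct (Compare_dec.le_lt_dec k i).
        - assert (i = k) by lia. subst i. rewrite Hp'1 by lia. lra.
        - rewrite Hp'2 by lia. lra. }
      split.
      { intros j Hj. destruct (Compare_dec.lt_dec j i) as [Hji|Hji].
        - rewrite Hp'1, Hp'1 by lia. apply Hinc; lia.
        - destruct (Nat.eq_dec j i) as [->|Hne].
          + rewrite Hp'1, Hp'2 by lia. pose proof (Hinc (S i) ltac:(lia)). lra.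
          + rewrite !Hp'2 by lia. pose proof (Hinc (S j) ltac:(lia)). lra. }
      split.
      { intros j Hj y Hy. destruct Hy as [Hy1 Hy2].
        destruct (Compare_dec.lt_dec j i) as [Hji|Hji].
        - rewrite (Hp'1 j) in Hy1 by lia. rewrite (Hp'1 (S j)) in Hy2 by lia.
          assert (p (S j) <= p i) by (apply (mono_le (S k) p Hinc); lia).
          unfold G0. rewrite gm_low by lra.
          unfold s', c'. destruct (Compare_dec.lt_dec j i) as [_|]; [|lia].
          apply Hpc; [lia|split; lra].
        - rewrite (Hp'2 j) in Hy1 by lia. rewrite (Hp'2 (S j)) in Hy2 by lia.
          assert (p (S i) <= p (S j)) by (apply (mono_le (S k) p Hinc); lia).
          assert (p (S (S j)) <= L) by (rewrite <- Hk; apply (mono_le (S k) p Hinc); lia).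
          unfold G0. rewrite gm_mid by lra.
          assert (Hz : p (S j) < y + (p (S i) - p i) < p (S (S j))) by (split; lra).
          rewrite (Hpc (S j) ltac:(lia) _ Hz).
          unfold s', c'. destruct (Compare_dec.lt_dec j i) as [|_]; [lia|].
          destruct (s (S j)); lra. }
      split.
      { exists (L :: l). intros y [Hy1 Hy2] Hny. simpl in Hny.
        destruct (Rlt_le_dec y L) as [HyL|HyL].
        - unfold G0. rewrite gm_top by lra.
          destruct (s i) eqn:Es.
          + rewrite (Hpc i Hi) by (split; lra). rewrite Es. cbv iota.
            try rewrite Es in Hri. lra.
          + rewrite (Hpc i Hi) by (split; lra). rewrite Es. cbv iota.
            try rewrite Es in Hri. lra.
        - unfold G0. rewrite gm_high by lra. apply Hl; [split|intro; apply Hny; right; assumption].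
          + destruct (Rle_lt_or_eq_dec _ _ HyL) as [?|E]; [assumption|exfalso; apply Hny; left; exact E].
          + exact Hy2. }
      split.
      { intros x Hx. apply Hmap. unfold G0. apply gm_X; lra || assumption. }
      split.
      { intros x y Hx Hy Hxy. apply Hinj in Hxy; try (unfold G0; apply gm_X; lra || assumption).
        assert (E : H0' (G0 x) = H0' (G0 y)) by congruence.
        unfold H0', G0 in E. rewrite !hm_gm in E. exact E. }
      { intros y Hy. destruct (Hsurj y Hy) as [x [Hx Hfx]]. exists (H0' x). split.
        - unfold H0'; apply hm_X; lra || assumption.
        - unfold G0, H0'. rewrite gm_hm. exact Hfx. } }
    destruct (IH _ _ _ _ _ G') as [w' [Hw' [l' Hl']]].
    exists (w' ++ (fl (p i) L ++ fl (p (S i)) L ++ (if s i then fl (p i) (p (S i)) else nil))).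
    split.
    + apply Forall_app; split; [exact Hw'|]. apply Forall_app; split; [apply Forall_fl; lra|].
      apply Forall_app; split; [apply Forall_fl; lra|]. destruct (s i); [apply Forall_fl; lra|constructor].
    + exists (map G0 l'). intros x Hx Hne.
      rewrite flip_word_app, flip_word_hm in Hne.
      replace x with (G0 (H0' x)) by (unfold G0, H0'; apply gm_hm).
      apply in_map. apply Hl'.
      * unfold H0'; apply hm_X; lra || assumption.
      * intro E. apply Hne. cbv beta in E. unfold G0, H0' in E. rewrite gm_hm in E. exact E.
Qed.

Theorem lemma4p8 :
  forall f : R -> R, IET_hat f ->
    exists w : list (R * R),
      Forall flip_interval w /\ eq_mod_fin f (flip_word w).
Proof.
  intros f (Hmap & Hinj & Hsurj & n & p & H0 & Hn & Hinc & Hpc).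
  set (P := fun i c => (forall x, p i < x < p (S i) -> f x = x + c) \/ (forall x, p i < x < p (S i) -> f x = - x + c)).
  set (c := fun i => epsilon (inhabits 0) (P i)).
  set (s := fun i => if excluded_middle_informative (forall x, p i < x < p (S i) -> f x = x + c i) then true else false).
  apply (main_gen n 1 p c s f).
  split; [lra|]. split; [exact H0|]. split; [exact Hn|]. split; [exact Hinc|].
  split.
  { intros j Hj x Hx. assert (HP : P j (c j)) by (apply epsilon_spec; exact (Hpc j Hj)).
    unfold s; cbv beta.
    match goal with |- context [excluded_middle_informative ?Q] => destruct (excluded_middle_informative Q) as [Ht|Hf] end.
    - apply Ht; exact Hx.
    - destruct HP as [HP|HP]; [exfalso; exact (Hf HP) | apply HP; exact Hx]. }
  split; [exists nil; intros x [H1 H2]; lra|].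
  split; [exact Hmap|]. split; [exact Hinj|exact Hsurj].
Qed.
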